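(* Let $U\in\mathcal L(\mathcal K)$ and $T,V,K\in\mathcal L(\mathcal H)$, $X\in\mathcal L(\mathcal K,\mathcal H)$, where $U$ and $V$ are unitary, $K$ is compact, $T=V+K$, $XU=TX$, and $X\mathcal K$ is dense in $\mathcal H$. Then $\sigma(T)\subset\mathbb T$.
   Context: $\sigma(T)$ denotes the spectrum of $T$ and $\mathbb T$ the unit circle. *)

(* Defs.v *)
From HB Require Import structures.
From mathcomp Require Import all_boot all_order all_algebra.
From mathcomp Require Import complex.
From mathcomp Require Import all_classical all_reals all_analysis.
Import numFieldNormedType.Exports.
Import GRing.Theory Num.Theory.

Set Implicit Arguments.
Unset Strict Implicit.
Unset Printing Implicit Defensive.

Local Open Scope ring_scope.
Local Open Scope classical_set_scope.

(* Together with completeness of H this makes H a complex Hilbert space. *)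
Definition is_inner_product (R : realType) (H : normedModType R[i])
    (ip : H -> H -> R[i]) : Prop :=
  [/\ forall (a : R[i]) (x y z : H), ip (a *: x + y) z = a * ip x z + ip y z,
      forall x y : H, ip y x = (ip x y)^* &
      forall x : H, `|x| ^+ 2 = ip x x].

Definition clinear (R : realType) (E F : normedModType R[i]) (f : E -> F) : Prop :=
  forall (a : R[i]) (x y : E), f (a *: x + y) = a *: f x + f y.

Definition bounded_op (R : realType) (E F : normedModType R[i]) (f : E -> F) : Prop :=
  clinear f /\ continuous f.

Definition is_adjoint (R : realType) (H : normedModType R[i])
    (ip : H -> H -> R[i]) (f g : H -> H) : Prop :=
  forall x y : H, ip (f x) y = ip x (g y).

Definition unitary (R : realType) (H : normedModType R[i])
    (ip : H -> H -> R[i]) (U : H -> H) : Prop :=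
  bounded_op U /\
  exists Us : H -> H, [/\ bounded_op Us, is_adjoint ip U Us,
                        forall x, Us (U x) = x & forall x, U (Us x) = x].

Definition compact_op (R : realType) (E F : normedModType R[i]) (f : E -> F) : Prop :=
  bounded_op f /\ compact (closure (f @` [set x : E | `|x| <= 1])).

Definition spectrum (R : realType) (H : normedModType R[i]) (T : H -> H) : set R[i] :=
  [set l : R[i] | ~ exists S : H -> H,
      [/\ bounded_op S, forall x, S (T x - l *: x) = x &
          forall y, T (S y) - l *: S y = y]].

Definition unit_circle (R : realType) : set R[i] := [set z : R[i] | `|z| = 1].

(* Main.v *)
Require Import Defs.
From HB Require Import structures.
From mathcomp Require Import all_boot all_order all_algebra.
From mathcomp Require Import complex.
From mathcomp Require Import all_classical all_reals all_analysis.
From mathcomp Require Import ring lra.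
Import numFieldNormedType.Exports.
Import Order.TTheory GRing.Theory Num.Theory.
Local Open Scope ring_scope.
Local Open Scope classical_set_scope.
Local Open Scope complex_scope.

Section NormR.
Context {R : realType}.

Definition ca (a : R[i]) : R := complex.Re `|a|.

Lemma normCE (a : R[i]) : `|a| = (ca a)%:C.
Proof. by rewrite /ca RRe_real // normr_real. Qed.

Lemma ca_ge0 a : 0 <= ca a.
Proof. by have := normr_ge0 a; rewrite normCE ler0c. Qed.

Lemma caM a b : ca (a * b) = ca a * ca b.
Proof. by apply: complexI; rewrite -normCE normrM !normCE rmorphM. Qed.

Lemma ca_real (r : R) : ca r%:C = `|r|.
Proof. by rewrite /ca normc_def /= expr0n /= addr0 sqrtr_sqr. Qed.

Lemma caV a : ca a^-1 = (ca a)^-1.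
Proof. by apply: complexI; rewrite -normCE normfV normCE fmorphV. Qed.

Lemma ca_eq0 a : (ca a == 0) = (a == 0).
Proof. by rewrite -[a == 0]normr_eq0 normCE -(rmorph0 (real_complex R)) (inj_eq (@complexI R)). Qed.

Lemma caD a b : ca (a + b) <= ca a + ca b.
Proof. by rewrite -lecR rmorphD -!normCE ler_normD. Qed.

Lemma caB a b : ca a - ca b <= ca (a - b).
Proof. by have := lerB_dist a b; rewrite !normCE -rmorphB lecR. Qed.

Lemma ca1 : ca 1 = 1.
Proof. by rewrite -(rmorph1 (real_complex R)) ca_real normr1. Qed.

Lemma caN a : ca (- a) = ca a.
Proof. by rewrite /ca normrN. Qed.
End NormR.

Section NormE.
Context {R : realType} {E : normedModType R[i]}.

Definition nn (x : E) : R := complex.Re `|x|.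

Lemma normE (x : E) : `|x| = (nn x)%:C.
Proof. by rewrite /nn RRe_real // normr_real. Qed.

Lemma nn_ge0 x : 0 <= nn x.
Proof. by have := normr_ge0 x; rewrite normE ler0c. Qed.

Lemma nnD x y : nn (x + y) <= nn x + nn y.
Proof. by have := ler_normD x y; rewrite !normE -rmorphD lecR. Qed.

Lemma nnB x y : nn x - nn y <= nn (x - y).
Proof. by have := lerB_dist x y; rewrite !normE -rmorphB lecR. Qed.

Lemma nnZ a x : nn (a *: x) = ca a * nn x.
Proof. by apply: (@complexI R); rewrite -normE normrZ normE normCE rmorphM. Qed.

Lemma nnN x : nn (- x) = nn x.
Proof. by rewrite /nn normrN. Qed.

Lemma nn_sym x y : nn (x - y) = nn (y - x).
Proof. by rewrite -nnN opprB. Qed.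

Lemma nn0 : nn 0 = 0.
Proof. by rewrite /nn normr0. Qed.

Lemma nn_eq0 x : nn x = 0 -> x = 0.
Proof. by move=> h; apply/eqP; rewrite -normr_eq0 normE h. Qed.

Lemma ball_nn (x y : E) (e : R) : ball x e%:C y <-> nn (x - y) < e.
Proof. by rewrite -ball_normE /ball_ /= normE ltcR. Qed.

Lemma closure_nn (A : set E) x : closure A x ->
  forall e, 0 < e -> exists y, A y /\ nn (x - y) < e.
Proof.
move=> cl e e0.
have e0' : 0 < e%:C :> R[i] by rewrite ltcR.
have [y [Ay By]] := cl (ball x e%:C) (nbhsx_ballx x e%:C e0').
by exists y; split => //; apply/ball_nn.
Qed.
End NormE.

Section Topo.
Context {R : realType} {E F : normedModType R[i]}.

Lemma ltc0R (r : R) : (0 < r%:C :> R[i]) = (0 < r).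
Proof. by rewrite ltcE /= eqxx. Qed.

Lemma pos_real (eps : R[i]) : 0 < eps -> exists e : R, 0 < e /\ eps = e%:C.
Proof.
move=> h; exists (complex.Re eps); rewrite RRe_real ?gtr0_real //; split => //.
by rewrite -ltcR RRe_real ?gtr0_real.
Qed.

Lemma cont_lip (f : E -> F) (L : R) : 0 <= L ->
  (forall x y, nn (f x - f y) <= L * nn (x - y)) -> continuous f.
Proof.
move=> L0 hf x; apply/cvgrPdist_lt => eps /pos_real [e [e0 ->]].
apply/nbhs_ballP; exists (e / (L + 1))%:C; first by rewrite /= ltc0R divr_gt0 // ltr_pwDr.
move=> y /ball_nn hy; rewrite normE ltcR.
apply: (le_lt_trans (hf x y)).
have L1 : 0 < L + 1 by rewrite ltr_pwDr.
rewrite (@le_lt_trans _ _ ((L + 1) * nn (x - y))) //.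
  by rewrite ler_wpM2r ?nn_ge0 // lerDl.
by rewrite mulrC -ltr_pdivlMr.
Qed.
End Topo.

Section Lin.
Context {R : realType} {E F : normedModType R[i]}.
Variable (f : E -> F) (hf : clinear f).

Lemma lin0 : f 0 = 0.
Proof.
have := hf 1 0 0; rewrite !scale1r addr0 => h.
by apply: (addrI (f 0)); rewrite addr0 -h.
Qed.

Lemma linZ a x : f (a *: x) = a *: f x.
Proof. by have := hf a x 0; rewrite !addr0 lin0 addr0. Qed.

Lemma linD x y : f (x + y) = f x + f y.
Proof. by have := hf 1 x y; rewrite !scale1r. Qed.

Lemma linN x : f (- x) = - f x.
Proof. by rewrite -scaleN1r linZ scaleN1r. Qed.

Lemma linB x y : f (x - y) = f x - f y.
Proof. by rewrite linD linN. Qed.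

Lemma cont_bound : continuous f ->
  exists L, 0 < L /\ forall x, nn (f x) <= L * nn x.
Proof.
move=> cf; have := cf 0 => /cvgrPdist_lt /(_ 1 ltr01); rewrite lin0.
move=> /nbhs_ballP [de /= /pos_real [d [d0 ->]] hd].
exists (2 / d); split; first by rewrite divr_gt0.
move=> x; have [->|x0] := eqVneq x 0; first by rewrite lin0 !nn0 mulr0.
have nx0 : 0 < nn x.
  by rewrite lt_neqAle nn_ge0 andbT; apply/eqP => h; move/eqP: x0; apply; apply: nn_eq0.
set s := d / 2 / nn x.
have s0 : 0 < s by rewrite /s !divr_gt0.
have := hd (s%:C *: x); rewrite /= sub0r normrN linZ normE.
rewrite -(rmorph1 (real_complex R)) ltcR nnZ ca_real gtr0_norm //.
move=> /(_ _) h.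
have : s * nn (f x) < 1.
  apply: h; apply/ball_nn; rewrite sub0r nnN nnZ ca_real gtr0_norm //.
  rewrite /s -mulrA mulVf ?gt_eqF // mulr1 ltr_pdivrMr // ltr_pMr //.
  by rewrite ltr1n.
move=> hh.
have -> : nn (f x) = s^-1 * (s * nn (f x)) by rewrite mulrA mulVf ?gt_eqF // mul1r.
apply: (le_trans (ler_wpM2l _ (ltW hh))); first by rewrite invr_ge0 ltW.
rewrite mulr1 /s le_eqVlt; apply/orP; left; apply/eqP; field.
by rewrite gt_eqF // gt_eqF.
Qed.
End Lin.

Section Seq.
Context {R : realType} {E : normedModType R[i]}.

Lemma compact_clus (S : set E) (u : nat -> E) : compact S -> (forall n, S (u n)) ->
  exists p, forall e, 0 < e -> forall m, exists n, (m <= n)%N /\ nn (u n - p) < e.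
Proof.
move=> cS Su.
have [|p [Sp clp]] := cS (u @ \oo) _.
  by exists 0%N => // n _; exact: Su.
exists p => e e0 m.
have e0' : 0 < e%:C :> R[i] by rewrite ltc0R.
have FA : (u @ \oo) (u @` [set n | (m <= n)%N]) by exists m => // k /= km; exists k.
have [q [[n /= mn <-] Bq]] := clp _ (ball p e%:C) FA (nbhsx_ballx p _ e0').
by exists n; split => //; rewrite nn_sym; apply/ball_nn.
Qed.
End Seq.

Section Complete.
Context {R : realType} {E : completeNormedModType R[i]}.

Lemma cauchy_complete (u : nat -> E) :
  (forall e, 0 < e -> exists N, forall n m, (N <= n)%N -> (N <= m)%N -> nn (u n - u m) < e) ->
  exists l, forall e, 0 < e -> exists N, forall n, (N <= n)%N -> nn (u n - l) < e.
Proof.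
move=> hc.
have : cvg (u @ \oo).
  apply/cauchy_cvgP; apply/cauchy_ballP => eps /pos_real [e [e0 ->]].
  have [N hN] := hc e e0.
  exists (u @` [set n | (N <= n)%N], u @` [set n | (N <= n)%N]).
    split; exists N => // k /= Nk; by exists k.
  by move=> [x y] /= [[n Nn <-] [m Nm <-]]; apply/ball_nn; apply: hN.
move=> /cvgrPdist_lt hl; exists (lim (u @ \oo)) => e e0.
have e0' : 0 < e%:C :> R[i] by rewrite ltc0R.
have [N _ hN] := hl _ e0'.
exists N => n Nn; have := hN n Nn; rewrite normE ltcR nn_sym //.
Qed.
End Complete.

Section Real.
Context {R : realType}.

Lemma small_inv (e : R) : 0 < e -> exists m : nat, (m.+1%:R)^-1 < e.
Proof.
move=> e0; exists (Num.Def.trunc e^-1).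
rewrite -[X in _ < X]invrK ltf_pV2 ?posrE ?invr_gt0 //.
exact: truncnS_gt.
Qed.

Lemma le0_eps (x : R) : (forall e, 0 < e -> x <= e) -> x <= 0.
Proof.
move=> h; rewrite leNgt; apply/negP => x0.
by have := h (x / 2) (divr_gt0 x0 (ltr0Sn _ 1)); lra.
Qed.
End Real.

Section Contr.
Context {R : realType} {E : completeNormedModType R[i]}.

Lemma fixed_point (F : E -> E) (q : R) : 0 <= q -> q < 1 ->
  (forall x y, nn (F x - F y) <= q * nn (x - y)) -> exists x, F x = x.
Proof.
move=> q0 q1 hF.
pose u n := iter n F 0.
set D := nn (u 1%N - u 0%N).
have D0 : 0 <= D by apply: nn_ge0.
have step n : nn (u n.+1 - u n) <= D * q ^+ n.
  elim: n => [|n IH]; first by rewrite expr0 mulr1.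
  rewrite /u !iterS (le_trans (hF _ _)) // exprS mulrCA ler_wpM2l //.
have bnd n k : (1 - q) * nn (u (n + k)%N - u n) <= D * q ^+ n * (1 - q ^+ k).
  elim: k => [|k IH]; first by rewrite addn0 subrr nn0 expr0 subrr !mulr0.
  have t := nnD (u (n + k).+1 - u (n + k)%N) (u (n + k)%N - u n).
  rewrite addrA subrK in t.
  have s := step (n + k)%N.
  rewrite exprD in s.
  rewrite addnS exprSr.
  have qn0 : 0 <= q ^+ n by rewrite exprn_ge0.
  have qk0 : 0 <= q ^+ k by rewrite exprn_ge0.
  have Dq : 0 <= D * q ^+ n by rewrite mulr_ge0.
  move: t s IH qn0 qk0 Dq.
  move: (nn (u (n + k).+1 - u n)) (nn (u (n + k).+1 - u (n + k)%N)) (nn (u (n + k)%N - u n)).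
  move: (q ^+ n) (q ^+ k) => qn qk c b a t s IH qn0 qk0 Dq.
  have -> : D * qn * (1 - qk * q) = D * qn * (1 - qk) + (1 - q) * (D * qn * qk).
    by ring.
  have q0' : 0 <= 1 - q by rewrite subr_ge0 ltW.
  have h1 : (1 - q) * c <= (1 - q) * (b + a) by apply: ler_wpM2l.
  have h2 : (1 - q) * b <= (1 - q) * (D * qn * qk) by apply: ler_wpM2l => //; rewrite -mulrA.
  nra.
have q1' : 0 < 1 - q by rewrite subr_gt0.
have hc : forall e, 0 < e -> exists N, forall n m, (N <= n)%N -> (N <= m)%N -> nn (u n - u m) < e.
  move=> e e0.
  have : `|q| < 1 by rewrite ger0_norm.
  move=> /(cvg_geometric 1) /cvgrPdist_lt /(_ (e * (1 - q) / (D + 1))) [].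
    by rewrite !divr_gt0 // ?mulr_gt0 // ltr_pwDr.
  move=> N _ hN; exists N => n m Nn Nm.
  have key k l : (N <= k)%N -> (k <= l)%N -> nn (u l - u k) < e.
    move=> Nk kl; have := bnd k (l - k)%N; rewrite subnKC //.
    have := hN k Nk; rewrite /geometric /= mul1r sub0r normrN ger0_norm ?exprn_ge0 //.
    move=> hq hb.
    have qk0 : 0 <= q ^+ k by rewrite exprn_ge0.
    have qlk0 : 0 <= q ^+ (l - k) by rewrite exprn_ge0.
    set a := nn _ in hb *.
    have hq' : (D + 1) * q ^+ k < e * (1 - q) by rewrite mulrC -ltr_pdivlMr ?ltr_pwDr.
    have a0 : 0 <= a by apply: nn_ge0.
    have h3 : D * q ^+ k * (1 - q ^+ (l - k)) <= D * q ^+ k.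
      by rewrite -[X in _ <= X]mulr1 ler_wpM2l ?mulr_ge0 // lerBlDr lerDl.
    have h4 : D * q ^+ k <= (D + 1) * q ^+ k by rewrite ler_wpM2r // lerDl.
    have h5 : (1 - q) * a < (1 - q) * e by rewrite [_ * e]mulrC; apply: (le_lt_trans hb); apply: (le_lt_trans h3); apply: (le_lt_trans h4).
    by rewrite ltr_pM2l in h5.
  have [nm|mn] := leqP n m; first by rewrite nn_sym; apply: key.
  by apply: key => //; apply: ltnW.
have [l hl] := cauchy_complete u hc.
exists l; apply/eqP; rewrite -subr_eq0; apply/eqP/nn_eq0.
apply/le_anti; rewrite nn_ge0 andbT; apply: le0_eps => e e0.
have [N hN] := hl (e / 2) (divr_gt0 e0 (ltr0Sn _ 1)).
have h1 := hN N (leqnn N); have h2 := hN N.+1 (leqnSn N).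
have h3 := hF l (u N).
have t1 := nnD (F l - F (u N)) (u N.+1 - l).
have -> : F l - l = F l - F (u N) + (u N.+1 - l) by rewrite /u iterS addrA subrK.
rewrite [nn (l - _)]nn_sym in h3.
have := nn_ge0 (u N - l). nra.
Qed.
End Contr.

Section Inv.
Context {R : realType} {E F : normedModType R[i]}.

Lemma inv_of_bb (B : E -> F) (c : R) : clinear B -> 0 < c ->
  (forall x, c * nn x <= nn (B x)) -> (forall y, exists x, B x = y) ->
  exists W : F -> E, [/\ forall y, B (W y) = y, forall x, W (B x) = x,
    clinear W & forall y, nn (W y) <= c^-1 * nn y].
Proof.
move=> lB c0 bb sB.
have [W hW] := choice sB.
have inj : forall x x', B x = B x' -> x = x'.
  move=> x x' h; apply/eqP; rewrite -subr_eq0; apply/eqP/nn_eq0.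
  apply/le_anti; rewrite nn_ge0 andbT.
  have := bb (x - x'); rewrite (linB _ lB) h subrr nn0.
  by rewrite pmulr_rle0.
exists W; split => //.
- by move=> x; apply: inj; rewrite hW.
- by move=> a y y'; apply: inj; rewrite hW lB !hW.
- move=> y; rewrite ler_pdivlMl //; have := bb (W y); by rewrite hW.
Qed.
End Inv.

Section Shift.
Context {R : realType} {E : completeNormedModType R[i]}.

Lemma shift_inv (V Vs : E -> E) (l : R[i]) : clinear V -> clinear Vs ->
  (forall x, nn (V x) = nn x) -> (forall x, nn (Vs x) = nn x) ->
  (forall x, V (Vs x) = x) -> ca l != 1 ->
  exists W : E -> E, [/\ forall y, V (W y) - l *: W y = y,
    forall x, W (V x - l *: x) = x, clinear W &
    forall y, nn (W y) <= `|1 - ca l|^-1 * nn y].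
Proof.
move=> lV lVs iV iVs VVs l1.
set t := ca l.
have c0 : 0 < `|1 - t| by rewrite normr_gt0 subr_eq0 eq_sym.
apply: inv_of_bb => //.
- move=> a x y /=; rewrite lV scalerDr scalerBr !scalerA [l * a]mulrC.
  by rewrite opprD !addrA (addrAC (a *: V x)).
- move=> x; have h1 := nnB (V x) (l *: x); have h2 := nnB (l *: x) (V x).
  rewrite nn_sym in h2; rewrite iV nnZ -/t in h1 h2.
  have := nn_ge0 x.
  have [h|h] := leP 0 (1 - t).
    by rewrite ger0_norm //; nra.
  by rewrite ltr0_norm //; nra.
- move=> y.
  have t0 : 0 <= t by apply: ca_ge0.
  have [t1|t1] := ltP t 1.
    have hF : forall x x', nn (Vs (y + l *: x) - Vs (y + l *: x')) <= t * nn (x - x').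
      move=> x x'; rewrite -(linB _ lVs) iVs.
      have -> : y + l *: x - (y + l *: x') = l *: (x - x').
        by rewrite scalerBr opprD addrA [y + _ - y]addrC addrA [- y + y]addrC subrr add0r.
      by rewrite nnZ.
    have [x hx] := fixed_point _ _ t0 t1 hF.
    exists x; have -> : V x = y + l *: x by rewrite -{1}hx VVs.
    by rewrite addrK.
  have t1' : 1 < t by rewrite lt_neqAle eq_sym l1.
  have l0 : l != 0 by rewrite -ca_eq0 -/t gt_eqF // (lt_trans ltr01).
  have tpos : 0 < t by apply: lt_trans t1'.
  have q0 : 0 <= t^-1 by rewrite invr_ge0 ltW.
  have q1 : t^-1 < 1 by rewrite invf_lt1.
  have hF : forall x x', nn (l^-1 *: (V x - y) - l^-1 *: (V x' - y)) <= t^-1 * nn (x - x').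
    move=> x x'; rewrite -scalerBr nnZ caV -/t.
    have -> : V x - y - (V x' - y) = V (x - x') by rewrite (linB _ lV) opprB addrA subrK.
    by rewrite iV.
  have [x hx] := fixed_point _ _ q0 q1 hF.
  exists x.
  have : l *: (l^-1 *: (V x - y)) = l *: x by rewrite hx.
  rewrite scalerA mulfV // scale1r => <-.
  by rewrite opprB addrC subrK.
Qed.
End Shift.

Section Riesz.
Context {R : realType} {E : normedModType R[i]}.

Lemma riesz (G : E -> E) (LG : R) : clinear G -> 0 < LG ->
  (forall x, nn (G x) <= LG * nn x) -> forall v, G v != 0 ->
  exists y s z0, [/\ G z0 = 0, y = s *: (v - z0), nn y = 1 &
     forall z, G z = 0 -> 1/2 <= nn (y - z)].
Proof.
move=> lG LG0 bG v Gv0.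
pose S := [set r | exists z, G z = 0 /\ r = nn (v - z)].
have S0 : S !=set0 by exists (nn (v - 0)), 0; rewrite (lin0 _ lG).
have lbS : lbound S 0 by move=> r [z [_ ->]]; apply: nn_ge0.
have hS : has_inf S by split => //; exists 0.
set d := inf S.
have d0 : 0 <= d by apply: lb_le_inf.
have dle : forall z, G z = 0 -> d <= nn (v - z).
  by move=> z Gz; apply: (ge_inf (proj2 hS)); exists z.
have dpos : 0 < d.
  rewrite lt_neqAle d0 andbT; apply/eqP => d0'.
  move/eqP: Gv0; apply; apply: nn_eq0; apply/le_anti; rewrite nn_ge0 andbT.
  apply: le0_eps => e e0.
  have [r [z [Gz ->]] hr] := inf_adherent (divr_gt0 e0 LG0) hS.
  rewrite -/d -d0' add0r in hr.
  have -> : G v = G (v - z) by rewrite (linB _ lG) Gz subr0.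
  apply: (le_trans (bG _)).
  by rewrite -ler_pdivlMl // mulrC ltW.
have [r [z0 [Gz0 ->]] hr] := inf_adherent dpos hS.
rewrite -/d in hr.
set r0 := nn (v - z0) in hr *.
have r0d : d <= r0 by apply: dle.
have r0pos : 0 < r0 by apply: lt_le_trans r0d.
exists ((r0^-1)%:C *: (v - z0)), (r0^-1)%:C, z0; split => //.
  by rewrite nnZ ca_real ger0_norm ?invr_ge0 ?(ltW r0pos) // mulVf // gt_eqF.
move=> z Gz.
have -> : (r0^-1)%:C *: (v - z0) - z = (r0^-1)%:C *: (v - (z0 + r0%:C *: z)).
  rewrite [in RHS]opprD [in RHS]addrA [in RHS]scalerBr scalerA -rmorphM mulVf ?gt_eqF //.
  by rewrite rmorph1 scale1r.
rewrite nnZ ca_real ger0_norm ?invr_ge0 ?(ltW r0pos) //.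
have h : d <= nn (v - (z0 + r0%:C *: z)).
  by apply: dle; rewrite (linD _ lG) (linZ _ lG) Gz0 Gz scaler0 addr0.
have ri0 : 0 <= r0^-1 by rewrite invr_ge0 ltW.
apply: le_trans (ler_wpM2l ri0 h).
rewrite [r0^-1 * d]mulrC ler_pdivlMr //; lra.
Qed.
End Riesz.

Section Fred.
Context {R : realType} {E : normedModType R[i]}.
Variables (A : E -> E) (lA : clinear A) (L : R) (L0 : 0 < L)
  (bA : forall x, nn (A x) <= L * nn x).
Hypothesis CP : forall u : nat -> E, (forall n, nn (u n) <= 1) ->
  exists p, forall e, 0 < e -> forall m, exists n, (m <= n)%N /\ nn (A (u n) - u n - p) < e.

Lemma zid (a b c d : E) : a - b - (c - d) = - (b - (a - c + d)).
Proof.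
by rewrite !opprB !addrA (addrAC (a - b) d) (addrAC a (-b)) (addrAC (a - c) (-b)).
Qed.

Lemma iter_lin k : clinear (iter k A).
Proof.
elim: k => [|k IH] a x y //=.
by rewrite IH lA.
Qed.

Lemma iter_bnd k x : nn (iter k A x) <= L ^+ k * nn x.
Proof.
elim: k => [|k IH]; first by rewrite expr0 mul1r.
rewrite iterS exprS -mulrA; apply: (le_trans (bA _)); rewrite ler_wpM2l ?(ltW L0) //.
Qed.

Lemma iter_kill j k y : iter j A y = 0 -> (j <= k)%N -> iter k A y = 0.
Proof.
move=> h jk; rewrite -(subnK jk) iterD h.
exact: (lin0 _ (iter_lin _)).
Qed.

Lemma surj_inj : (forall y, exists x, A x = y) -> forall x, A x = 0 -> x = 0.
Proof.
move=> sA x1 Ax1; apply: contrapT => x10.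
have [g hg] := choice sA.
pose v k := iter k g x1.
have hv1 k : iter k A (v k) = x1.
  elim: k => [//|k IH]; rewrite iterSr /v iterS hg; exact: IH.
have hY : forall k, exists y, [/\ nn y = 1, iter k.+1 A y = 0 &
    forall z, iter k A z = 0 -> 1/2 <= nn (y - z)].
  move=> k.
  have Lk : 0 < L ^+ k by rewrite exprn_gt0.
  have [|y [s [z0 [Gz0 -> ny hy]]]] := @riesz _ _ (iter k A) (L ^+ k) (iter_lin k) Lk (iter_bnd k) (v k).
    by rewrite hv1; apply/eqP.
  exists (s *: (v k - z0)); split => //.
  rewrite (linZ _ (iter_lin _)) (linB _ (iter_lin _)) iterS hv1 Ax1 iterS Gz0 (lin0 _ lA).
  by rewrite subrr scaler0.
have [Y hY'] := choice hY.
have sep j k : (j < k)%N -> 1/2 <= nn (A (Y k) - Y k - (A (Y j) - Y j)).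
  move=> jk.
  have [_ h1 _] := hY' k; have [_ h2 _] := hY' j; have [_ _ h3] := hY' k.
  have -> : A (Y k) - Y k - (A (Y j) - Y j) = - (Y k - (A (Y k) - A (Y j) + Y j)).
    exact: zid.
  rewrite nnN; apply: h3.
  rewrite (linD _ (iter_lin _)) (linB _ (iter_lin _)) -!iterSr h1.
  rewrite (iter_kill _ k _ h2 jk) (iter_kill _ k.+1 _ h2 (ltnW jk)).
  by rewrite subrr addr0.
have Y1 : forall n, nn (Y n) <= 1 by move=> n; have [-> _ _] := hY' n.
have [p hp] := CP Y Y1.
have q0 : 0 < 1/4 :> R by rewrite divr_gt0.
have [n1 [_ hn1]] := hp _ q0 0%N.
have [n2 [hn12 hn2]] := hp _ q0 n1.+1.
have := sep n1 n2 hn12.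
have := nnD (A (Y n2) - Y n2 - p) (p - (A (Y n1) - Y n1)).
rewrite addrA subrK [nn (p - _)]nn_sym.
lra.
Qed.
Lemma inv_le_small (m n : nat) (e : R) : (m <= n)%N -> (m.+1%:R)^-1 < e -> (n.+1%:R)^-1 < e.
Proof.
move=> mn h; apply: le_lt_trans h.
by rewrite lef_pV2 ?posrE ?ltr0Sn // ler_nat ltnS.
Qed.

Lemma gamma_claim : exists g, 0 < g /\ forall w, nn w <= 1 ->
  (forall z, A z = 0 -> 1/2 <= nn (w - z)) -> g <= nn (A w).
Proof.
apply: contrapT => H.
have hw : forall n : nat, exists w, [/\ nn w <= 1,
    (forall z, A z = 0 -> 1/2 <= nn (w - z)) & nn (A w) < (n.+1%:R)^-1].
  move=> n; apply: contrapT => hn; apply: H; exists (n.+1%:R)^-1; split.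
    by rewrite invr_gt0 ltr0Sn.
  move=> w w1 wz; rewrite leNgt; apply/negP => hlt; apply: hn; exists w; split => //.
have [W hW] := choice hw.
have W1 : forall n, nn (W n) <= 1 by move=> n; have [] := hW n.
have [p hp] := CP W W1.
have near : forall e, 0 < e -> exists n, nn (A (W n)) < e /\ nn (W n - - p) < e + e.
  move=> e e0; have [m hm] := small_inv _ e0.
  have [n [mn hn]] := hp e e0 m.
  have hA : nn (A (W n)) < e by have [_ _ h] := hW n; apply: lt_trans h _; apply: inv_le_small hm.
  exists n; split => //.
  have -> : W n - - p = A (W n) - (A (W n) - W n - p).
    by rewrite opprK !opprB addrCA [A (W n) + (W n - _)]addrCA subrr addr0 addrC.
  apply: le_lt_trans (nnD _ _) _; rewrite nnN; lra.
have Aw0 : A (- p) = 0.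
  apply: nn_eq0; apply/le_anti; rewrite nn_ge0 andbT; apply: le0_eps => e e0.
  have k0 : 0 < 2 * L + 1 by rewrite addr_gt0 // mulr_gt0.
  have [n [h1 h2]] := near (e / (2 * L + 1)) (divr_gt0 e0 k0).
  have t := nnD (A (- p) - A (W n)) (A (W n)); rewrite subrK in t.
  have t2 := bA (- p - W n); rewrite (linB _ lA) nn_sym in t2.
  have ee : e = (2 * L + 1) * (e / (2 * L + 1)) by rewrite mulrC -mulrA mulVf ?gt_eqF // mulr1.
  rewrite ee.
  set f := e / (2 * L + 1) in h1 h2 ee *.
  have f0 : 0 < f by rewrite divr_gt0.
  have : L * nn (W n - - p) <= L * (f + f) by rewrite ler_wpM2l ?(ltW L0) // ltW.
  nra.
have [n [_ h2]] := near (1/8) (divr_gt0 ltr01 (ltr0Sn _ 7)).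
have [_ h3 _] := hW n.
have := h3 _ Aw0; lra.
Qed.

Lemma dist_ex (x : E) : exists d, 0 <= d /\ (forall z, A z = 0 -> d <= nn (x - z)) /\
  (forall e, 0 < e -> exists z, A z = 0 /\ nn (x - z) < d + e).
Proof.
pose S := [set r | exists z, A z = 0 /\ r = nn (x - z)].
have S0 : S !=set0 by exists (nn (x - 0)), 0; rewrite (lin0 _ lA).
have lbS : lbound S 0 by move=> r [z [_ ->]]; apply: nn_ge0.
have hS : has_inf S by split => //; exists 0.
exists (inf S); split; first by apply: lb_le_inf.
split; first by move=> z Az; apply: (ge_inf (proj2 hS)); exists z.
move=> e e0; have [r [z [Az ->]] hr] := inf_adherent e0 hS.
by exists z.
Qed.

Lemma near_kernel g : 0 < g -> (forall w, nn w <= 1 ->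
  (forall z, A z = 0 -> 1/2 <= nn (w - z)) -> g <= nn (A w)) ->
  forall x, exists z, A z = 0 /\ nn (x - z) <= nn (A x) / g + 1.
Proof.
move=> g0 hg x.
have [d [d0 [dle dapp]]] := dist_ex x.
have hq : 0 <= nn (A x) / g by rewrite divr_ge0 ?nn_ge0 // ltW.
have [dz|dpos] := eqVneq d 0.
  have [z [Az hz]] := dapp 1 ltr01; exists z; split => //.
  rewrite dz add0r in hz; lra.
have dpos' : 0 < d by rewrite lt_neqAle eq_sym dpos d0.
have [z0 [Az0 hz0]] := dapp d dpos'.
exists z0; split => //.
set r := 2 * d.
have r0 : 0 < r by rewrite mulr_gt0.
have := hg ((r^-1)%:C *: (x - z0)).
rewrite nnZ ca_real ger0_norm ?invr_ge0 ?(ltW r0) //.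
rewrite (linZ _ lA) nnZ ca_real ger0_norm ?invr_ge0 ?(ltW r0) // (linB _ lA) Az0 subr0.
move=> /(_ _ _) h.
have h1 : r^-1 * nn (x - z0) <= 1.
  by rewrite ler_pdivrMl // mulr1 /r; lra.
have h2 : forall z, A z = 0 -> 1 / 2 <= nn (r^-1%:C *: (x - z0) - z).
  move=> z Az.
  have -> : (r^-1)%:C *: (x - z0) - z = (r^-1)%:C *: (x - (z0 + r%:C *: z)).
    rewrite [in RHS]opprD [in RHS]addrA [in RHS]scalerBr scalerA -rmorphM mulVf ?gt_eqF //.
    by rewrite rmorph1 scale1r.
  rewrite nnZ ca_real ger0_norm ?invr_ge0 ?(ltW r0) //.
  have : d <= nn (x - (z0 + r%:C *: z)).
    by apply: dle; rewrite (linD _ lA) (linZ _ lA) Az0 Az scaler0 addr0.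
  move=> hd; have ri0 : 0 <= r^-1 by rewrite invr_ge0 ltW.
  apply: le_trans (ler_wpM2l ri0 hd).
  by rewrite /r invfM -mulrA mulVf ?gt_eqF // mulr1 div1r.
have h3 := h h1 h2.
have : g * r <= nn (A x).
  by move: h3; rewrite mulrC ler_pdivlMr.
move=> h4.
have : r <= nn (A x) / g by rewrite ler_pdivlMr // mulrC.
rewrite /r; lra.
Qed.

Lemma zid3 (a y b c : E) : (a - y) - (a - b - c) = b - (y - c).
Proof. by rewrite -[a - b - c]addrA [a - y]addrC addrKA opprD !opprK opprB addrCA [-y + c]addrC. Qed.

Lemma idt_gen (a w y p : E) (M : R) : 0 < M ->
  w - (y - M%:C *: p) = (a - y) - M%:C *: ((M^-1)%:C *: a - (M^-1)%:C *: w - p).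
Proof.
move=> M0.
have hMM v : M%:C *: ((M^-1)%:C *: v) = v.
  by rewrite scalerA -rmorphM mulfV ?gt_eqF // rmorph1 scale1r.
by rewrite !scalerBr !hMM zid3.
Qed.

Lemma dr_surj : (forall y e, 0 < e -> exists x, nn (A x - y) < e) ->
  forall y, exists x, A x = y.
Proof.
move=> DR y.
have [g [g0 hg]] := gamma_claim.
have NK := near_kernel _ g0 hg.
have hX : forall n : nat, exists x, nn (A x - y) < (n.+1%:R)^-1.
  by move=> n; apply: DR; rewrite invr_gt0 ltr0Sn.
have [X hX'] := choice hX.
have [Z hZ'] := choice (fun n => NK (X n)).
set M := (nn y + 1) / g + 1.
have M1 : 0 <= (nn y + 1) / g by rewrite divr_ge0 ?(ltW g0) // addr_ge0 ?nn_ge0.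
have M0 : 0 < M by rewrite /M; lra.
pose w n := X n - Z n.
have Aw n : A (w n) = A (X n) by rewrite /w (linB _ lA); have [-> _] := hZ' n; rewrite subr0.
have wM n : nn (w n) <= M.
  have [_ h] := hZ' n; apply: le_trans h _; rewrite /M lerD2r.
  rewrite ler_pM2r ?invr_gt0 //.
  have := nnD (A (X n) - y) y; rewrite subrK => t.
  have := hX' n.
  have : (n.+1%:R)^-1 <= 1 :> R by rewrite invf_le1 ?ler1n ?ltr0Sn.
  move=> h1 h2; apply: (le_trans t); rewrite addrC lerD2l; exact: ltW (lt_le_trans h2 h1).
pose u n := (M^-1)%:C *: w n.
have u1 n : nn (u n) <= 1.
  by rewrite /u nnZ ca_real ger0_norm ?invr_ge0 ?(ltW M0) // ler_pdivrMl // mulr1.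
have [p hp] := CP u u1.
exists (y - M%:C *: p).
apply/eqP; rewrite -subr_eq0; apply/eqP/nn_eq0; apply/le_anti; rewrite nn_ge0 andbT; apply: le0_eps => e e0.
have K0 : 0 < L * (1 + M) + 1 by rewrite addr_gt0 // mulr_gt0 // addr_gt0.
set K := L * (1 + M) + 1 in K0.
have f0 : 0 < e / K by rewrite divr_gt0.
set f := e / K in f0.
have [m hm] := small_inv _ f0.
have [n [mn hn]] := hp f f0 m.
have hx : nn (A (X n) - y) < f by apply: lt_trans (hX' n) _; apply: inv_le_small hm.
have idt : w n - (y - M%:C *: p) = (A (w n) - y) - M%:C *: (A (u n) - u n - p).
  by rewrite /u (linZ _ lA); apply: idt_gen.
have hwn : nn (w n - (y - M%:C *: p)) <= f + M * f.
  rewrite idt; apply: le_trans (nnD _ _) _; rewrite nnN nnZ ca_real ger0_norm ?(ltW M0) //.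
  rewrite Aw; apply: lerD; first exact: ltW.
  by rewrite ler_wpM2l ?(ltW M0) // ltW.
have t := nnD (A (y - M%:C *: p) - A (w n)) (A (w n) - y).
rewrite addrA subrK in t.
have t2 := bA (y - M%:C *: p - w n).
rewrite (linB _ lA) [X in _ <= L * X]nn_sym in t2.
have ee : e = K * f by rewrite /f mulrC -mulrA mulVf ?gt_eqF // mulr1.
rewrite ee /K.
have : L * nn (w n - (y - M%:C *: p)) <= L * (f + M * f) by rewrite ler_wpM2l ?(ltW L0).
rewrite -Aw in hx.
nra.
Qed.

Lemma fred_inv : (forall y e, 0 < e -> exists x, nn (A x - y) < e) ->
  exists g, 0 < g /\ exists W : E -> E, [/\ forall y, A (W y) = y,
    forall x, W (A x) = x, clinear W & forall y, nn (W y) <= g^-1 * nn y].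
Proof.
move=> DR.
have sA := dr_surj DR.
have inj := surj_inj sA.
have [g [g0 hg]] := gamma_claim.
exists g; split => //.
apply: inv_of_bb => // x.
have [->|x0] := eqVneq x 0; first by rewrite (lin0 _ lA) !nn0 mulr0.
have nx0 : 0 < nn x.
  rewrite lt_neqAle nn_ge0 andbT; apply/eqP => h; move/eqP: x0; apply.
  exact: nn_eq0.
have := hg ((nn x)^-1%:C *: x).
rewrite nnZ ca_real ger0_norm ?invr_ge0 ?(ltW nx0) // mulVf ?gt_eqF //.
rewrite (linZ _ lA) nnZ ca_real ger0_norm ?invr_ge0 ?(ltW nx0) //.
move=> /(_ (lexx _)) h.
have : g <= (nn x)^-1 * nn (A x).
  apply: h => z /inj ->; rewrite subr0 nnZ ca_real ger0_norm ?invr_ge0 ?(ltW nx0) //.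
  by rewrite mulVf ?gt_eqF //; lra.
by rewrite mulrC -ler_pdivlMr.
Qed.

End Fred.

Lemma iso_of_unitary {R : realType} {E : normedModType R[i]} (ip : E -> E -> R[i])
  (V Vs : E -> E) : is_inner_product ip -> is_adjoint ip V Vs ->
  (forall x, Vs (V x) = x) -> (forall x, V (Vs x) = x) ->
  (forall x, nn (V x) = nn x) /\ (forall x, nn (Vs x) = nn x).
Proof.
move=> [_ _ hn] adj VsV VVs; rewrite /is_adjoint in adj.
have key (a b : E) : `|a| ^+ 2 = `|b| ^+ 2 -> nn a = nn b.
  by move=> h; rewrite /nn; congr complex.Re; apply/eqP; rewrite -(eqrXn2 (n:=2)) // h.
split => x; apply: key; rewrite !hn.
  by rewrite (adj x (V x)) VsV.
by rewrite -(adj (Vs x) x) VVs.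
Qed.

Local Close Scope complex_scope.

Theorem lemma7p1 (R : realType)
  (HH KK : completeNormedModType R[i])
  (ipH : HH -> HH -> R[i]) (ipK : KK -> KK -> R[i])
  (hipH : is_inner_product ipH) (hipK : is_inner_product ipK)
  (U : KK -> KK) (T V K : HH -> HH) (X : KK -> HH)
  (hU : unitary ipK U) (hV : unitary ipH V)
  (hT : bounded_op T) (hK : compact_op K) (hX : bounded_op X)
  (hTVK : forall x, T x = V x + K x)
  (hXU : forall k, X (U k) = T (X k))
  (hdense : closure (range X) = setT) :
  spectrum T `<=` @unit_circle R.
Proof.
move=> l hl; apply: contrapT => hne.
have l1 : ca l != 1.
  apply/eqP => h; apply: hne; rewrite /unit_circle /= normCE h.
  by rewrite rmorph1.
case: hV => [[lV cV] [Vs [[lVs cVs] adjV VsV VVs]]].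
case: hU => [[lU cU] [Us [[lUs cUs] adjU UsU UUs]]].
have [isoV isoVs] := iso_of_unitary _ _ _ hipH adjV VsV VVs.
have [isoU isoUs] := iso_of_unitary _ _ _ hipK adjU UsU UUs.
have [WV [hWV1 hWV2 lWV bWV]] := shift_inv _ _ _ lV lVs isoV isoVs VVs l1.
have [WU [hWU1 hWU2 lWU bWU]] := shift_inv _ _ _ lU lUs isoU isoUs UUs l1.
set c := `|1 - ca l| in bWV bWU.
have c0 : 0 < c by rewrite normr_gt0 subr_eq0 eq_sym.
case: hT => [lT cT]; have [LT [LT0 bT]] := cont_bound _ lT cT.
case: hK => [[lK cK] compK].
case: hX => [lX cX].
pose A' x := WV (T x - l *: x).
have lBl : clinear (fun x : HH => T x - l *: x).
  move=> a x y /=; rewrite lT scalerDr scalerBr !scalerA [l * a]mulrC.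
  by rewrite opprD !addrA (addrAC (a *: T x)).
have lA' : clinear A' by move=> a x y; rewrite /A' lBl lWV.
have A'E x : A' x - x = WV (K x).
  rewrite /A' hTVK addrAC (linD _ lWV) hWV2.
  by rewrite addrC addKr.
have ci0 : 0 <= c^-1 by rewrite invr_ge0 ltW.
have bBl x : nn (T x - l *: x) <= (LT + ca l) * nn x.
  apply: le_trans (nnD _ _) _; rewrite nnN nnZ mulrDl lerD2r; exact: bT.
have LA0 : 0 < c^-1 * (LT + ca l) + 1.
  by rewrite ltr_pwDr // mulr_ge0 // addr_ge0 ?ca_ge0 // ltW.
have bA' x : nn (A' x) <= (c^-1 * (LT + ca l) + 1) * nn x.
  apply: le_trans (bWV _) _; rewrite mulrDl mul1r -mulrA.
  apply: le_trans (ler_wpM2l ci0 (bBl x)) _; by rewrite lerDl nn_ge0.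
have CP : forall u : nat -> HH, (forall n, nn (u n) <= 1) ->
    exists p, forall e, 0 < e -> forall m, exists n, (m <= n)%N /\ nn (A' (u n) - u n - p) < e.
  move=> u u1.
  have hin n : closure (K @` [set x | `|x| <= 1]) (K (u n)).
    apply: subset_closure; exists (u n) => //=.
    by rewrite normE lecE /= eqxx /=; exact: u1.
  have [q hq] := compact_clus _ _ compK hin.
  exists (WV q) => e e0 m.
  have [n [mn hn]] := hq (c * e) (mulr_gt0 c0 e0) m.
  exists n; split => //.
  rewrite A'E -(linB _ lWV); apply: le_lt_trans (bWV _) _.
  by rewrite mulrC ltr_pdivrMr // mulrC.
have DR : forall y e, 0 < e -> exists x, nn (A' x - y) < e.
  move=> y e e0.
  have hc : closure (range X) (V y - l *: y) by rewrite hdense.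
  have [_ [[k _ <-] hk]] := closure_nn _ _ hc _ (mulr_gt0 c0 e0).
  exists (X (WU k)).
  have Xk : X k = T (X (WU k)) - l *: X (WU k).
    by rewrite -{1}(hWU1 k) (linB _ lX) (linZ _ lX) hXU.
  rewrite /A' -Xk -(hWV2 y) -(linB _ lWV).
  apply: le_lt_trans (bWV _) _.
  by rewrite nn_sym mulrC ltr_pdivrMr // mulrC.
have [g [g0 [G [hG1 hG2 lG bG]]]] := fred_inv _ lA' _ LA0 bA' CP DR.
apply: hl; exists (fun y => G (WV y)); split.
- split; first by move=> a x y; rewrite lWV lG.
  apply: (@cont_lip _ _ _ _ (g^-1 * c^-1)); first by rewrite mulr_ge0 // invr_ge0 ltW.
  move=> x y; rewrite -(linB _ lG) -(linB _ lWV); apply: le_trans (bG _) _.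
  by rewrite -mulrA ler_wpM2l ?invr_ge0 ?(ltW g0).
- by move=> x; exact: hG2.
- move=> y; set s := G (WV y).
  have e1 := hWV1 (T s - l *: s).
  change (V (A' s) - l *: A' s = T s - l *: s) in e1.
  by rewrite hG1 hWV1 in e1.
Qed.
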